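(* Let $L$ be a localization functor on abelian groups. The following are equivalent: (1) $\mathrm{support}\, L=\omega_0$; (2) the homomorphism $\bigoplus_{\omega_0}a_{\mathbb{Z}}:F_{\omega_0}\to\bigoplus_{\omega_0}L\mathbb{Z}$ is an $L$-localization, i.e. $LF_{\omega_0}=\bigoplus_{\omega_0}L\mathbb{Z}$; (3) for every cardinal $\kappa$, $LF_\kappa=\bigoplus_\kappa L\mathbb{Z}$ (via $\bigoplus_\kappa a_{\mathbb{Z}}$).
   Context: All groups are abelian. A localization is a functor $L:\mathcal{Ab}\to\mathcal{Ab}$ with a natural transformation $a:\mathrm{Id}\to L$ such that $a_{LX}=La_X$ and $a_{LX}$ is an isomorphism for all $X$; $X$ is $L$-local if $a_X$ is an isomorphism. For a cardinal $\kappa$ let $F_\kappa=\bigoplus_\kappa\mathbb{Z}$ (with a chosen basis indexed by $\kappa$), and let $g:LF_\kappa\to\prod_\kappa L\mathbb{Z}$ be the unique homomorphism with $g\circ a_{F_\kappa}$ equal to $F_\kappa\xrightarrow{\bigoplus_\kappa a_{\mathbb{Z}}}\bigoplus_\kappa L\mathbb{Z}\subseteq\prod_\kappa L\mathbb{Z}$ (it exists since products of $L$-local groups are $L$-local). Let $N^\kappa_L$ be the image of $g$. $\mathrm{support}_\kappa L$ is the least cardinal strictly greater than the cardinalities of the supports of all elements of $N^\kappa_L\subseteq\prod_\kappa L\mathbb{Z}$. $\mathrm{support}\, L$ is the supremum of $\mathrm{support}_\kappa L$ over all cardinals $\kappa$ (or $\infty$ if unbounded). *)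

(* Defs.v *)
(* We avoid MathComp's zmodType because it requires a
   choiceType structure, which the (arbitrary, infinite) groups here,
   e.g. direct sums over an arbitrary index type, do not carry
   constructively. *)
From Stdlib Require Import ZArith List Classical FunctionalExtensionality ProofIrrelevance.
Set Implicit Arguments.

Record AbGroup : Type := {
  carrier :> Type;
  zero : carrier;
  add : carrier -> carrier -> carrier;
  opp : carrier -> carrier;
  addA : forall x y z, add x (add y z) = add (add x y) z;
  addC : forall x y, add x y = add y x;
  add0 : forall x, add zero x = x;
  addN : forall x, add (opp x) x = zero
}.
Arguments zero {_}.
Arguments add {_} _ _.
Arguments opp {_} _.
Arguments addA {_} _ _ _.
Arguments addC {_} _ _.
Arguments add0 {_} _.
Arguments addN {_} _.

Record hom (X Y : AbGroup) : Type := {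
  hfun :> X -> Y;
  hadd : forall x y, hfun (add x y) = add (hfun x) (hfun y)
}.

Lemma hom0 (X Y : AbGroup) (f : hom X Y) : f zero = zero.
Proof.
  assert (H : add (f zero) (f zero) = f zero).
  { rewrite <- hadd, add0; reflexivity. }
  transitivity (add (add (opp (f zero)) (f zero)) (f zero)).
  - rewrite addN, add0; reflexivity.
  - rewrite <- addA, H; apply addN.
Qed.

Definition is_iso (X Y : AbGroup) (f : hom X Y) : Prop :=
  exists g : Y -> X, (forall x, g (f x) = x) /\ (forall y, f (g y) = y).

Definition Zgrp : AbGroup :=
  {| carrier := Z; zero := 0%Z; add := Z.add; opp := Z.opp;
     addA := Z.add_assoc; addC := Z.add_comm; add0 := Z.add_0_l;
     addN := Z.add_opp_diag_l |}.

Definition Prod (K : Type) (G : AbGroup) : AbGroup.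
Proof.
  refine {| carrier := K -> G; zero := fun _ => zero;
            add := fun f g k => add (f k) (g k);
            opp := fun f k => opp (f k) |}.
  - intros; apply functional_extensionality; intro; apply addA.
  - intros; apply functional_extensionality; intro; apply addC.
  - intros; apply functional_extensionality; intro; apply add0.
  - intros; apply functional_extensionality; intro; apply addN.
Defined.

Definition fin_supp (K : Type) (G : AbGroup) (f : K -> G) : Prop :=
  exists s : list K, forall k, f k <> zero -> In k s.

Arguments fin_supp {K G} f.

Lemma oppN0 (G : AbGroup) (x : G) : opp x <> zero -> x <> zero.
Proof.
  intros H Hx; apply H; subst.
  rewrite <- (addN zero) at 2. rewrite addC, add0. reflexivity.
Qed.

Lemma fin_supp_add (K : Type) (G : AbGroup) (f g : K -> G) :
  fin_supp f -> fin_supp g -> fin_supp (fun k => add (f k) (g k)).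
Proof.
  intros [s Hs] [t Ht]; exists (s ++ t); intros k Hk; apply in_or_app.
  destruct (classic (f k = zero)) as [E|E].
  - right; apply Ht; rewrite E, add0 in Hk; exact Hk.
  - left; apply Hs; exact E.
Qed.

Lemma fin_supp_opp (K : Type) (G : AbGroup) (f : K -> G) : fin_supp f -> fin_supp (fun k => opp (f k)).
Proof.
  intros [s Hs]; exists s; intros k Hk; apply Hs; apply oppN0; exact Hk.
Qed.

Lemma fin_supp0 (K : Type) (G : AbGroup) : @fin_supp K G (fun _ => zero).
Proof. exists nil; intros k H; exfalso; apply H; reflexivity. Qed.

Lemma sig_eq_pi {A} (P : A -> Prop) (x y : {a | P a}) :
  proj1_sig x = proj1_sig y -> x = y.
Proof.
  destruct x, y; simpl; intros ->; f_equal; apply proof_irrelevance.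
Qed.

Definition DSum (K : Type) (G : AbGroup) : AbGroup.
Proof.
  refine {| carrier := {f : K -> G | fin_supp f};
            zero := exist _ (fun _ => zero) (@fin_supp0 K G);
            add := fun f g => exist _ _ (fin_supp_add (proj2_sig f) (proj2_sig g));
            opp := fun f => exist _ _ (fin_supp_opp (proj2_sig f)) |}.
  - intros; apply sig_eq_pi; simpl; apply functional_extensionality; intro; apply addA.
  - intros; apply sig_eq_pi; simpl; apply functional_extensionality; intro; apply addC.
  - intros; apply sig_eq_pi; simpl; apply functional_extensionality; intro; apply add0.
  - intros; apply sig_eq_pi; simpl; apply functional_extensionality; intro; apply addN.
Defined.

Definition F (K : Type) : AbGroup := DSum K Zgrp.

Lemma fin_supp_map K (X Y : AbGroup) (f : hom X Y) (u : K -> X) :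
  fin_supp u -> fin_supp (fun k => f (u k)).
Proof.
  intros [s Hs]; exists s; intros k Hk; apply Hs; intro E; apply Hk;
  rewrite E; apply hom0.
Qed.

Definition dsum_map (K : Type) (X Y : AbGroup) (f : hom X Y) : hom (DSum K X) (DSum K Y).
Proof.
  refine {| hfun := fun u : DSum K X => (exist _ _ (fin_supp_map f (proj2_sig u)) : DSum K Y) |}.
  intros; apply sig_eq_pi; simpl; apply functional_extensionality; intro; apply hadd.
Defined.

Definition incl (K : Type) (G : AbGroup) : hom (DSum K G) (Prod K G).
Proof.
  refine {| hfun := fun u : DSum K G => (proj1_sig u : Prod K G) |}. intros; reflexivity.
Defined.

Record Localization : Type := {
  Lob :> AbGroup -> AbGroup;
  Lmap : forall X Y : AbGroup, hom X Y -> hom (Lob X) (Lob Y);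
  Lmap_id : forall (X : AbGroup) (f : hom X X),
      (forall x, f x = x) -> forall y, Lmap f y = y;
  Lmap_comp : forall (X Y Z : AbGroup) (f : hom X Y) (g : hom Y Z) (h : hom X Z),
      (forall x, h x = g (f x)) -> forall y, Lmap h y = Lmap g (Lmap f y);
  La : forall X : AbGroup, hom X (Lob X);
  La_nat : forall (X Y : AbGroup) (f : hom X Y) (x : X),
      Lmap f (La X x) = La Y (f x);
  La_LX : forall (X : AbGroup) (y : Lob X), La (Lob X) y = Lmap (La X) y;
  La_LX_iso : forall X : AbGroup, is_iso (La (Lob X))
}.

Definition is_L_localization (L : Localization) (X Y : AbGroup) (f : hom X Y) : Prop :=
  exists phi : hom (L X) Y, is_iso phi /\ forall x, phi (La L X x) = f x.

(* N^K_L : the image of the (unique) homomorphism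
   g : L F_K -> prod_K L Z  with  g o a_{F_K} = incl o (+)_K a_Z. *)
Definition N_L (L : Localization) (K : Type) (y : Prod K (L Zgrp)) : Prop :=
  exists g : hom (L (F K)) (Prod K (L Zgrp)),
    (forall x, g (La L (F K) x) = incl K (L Zgrp) (dsum_map K (La L Zgrp) x)) /\
    exists x, g x = y.

Definition supp_at_least (K : Type) (G : AbGroup) (y : K -> G) (n : nat) : Prop :=
  exists s : list K, NoDup s /\ length s = n /\ forall k, In k s -> y k <> zero.

(* support L = omega_0.
   support_K L = least cardinal > |supp y| for all y in N^K_L, and
   support L = sup_K support_K L.  Hence  support L = omega_0  iff
   (i) every support_K L <= omega_0, i.e. every y in every N^K_L has
       finite support, and
   (ii) the support_K L are not bounded by a finite cardinal, i.e. for every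
       n there are K and y in N^K_L with |supp y| >= n. *)
Definition support_is_omega0 (L : Localization) : Prop :=
  (forall (K : Type) (y : Prod K (L Zgrp)), @N_L L K y -> @fin_supp K (L Zgrp) y) /\
  (forall n : nat, exists (K : Type) (y : Prod K (L Zgrp)),
      @N_L L K y /\ @supp_at_least K (L Zgrp) y n).

(* Main.v *)
Require Import Defs.
From Stdlib Require Import ZArith List Classical ClassicalEpsilon FunctionalExtensionality ProofIrrelevance Lia Permutation.
Import ListNotations.
Set Implicit Arguments.

Lemma addr0 (G : AbGroup) (x : G) : add x zero = x.
Proof. rewrite addC; apply add0. Qed.

Lemma add_cancel (G : AbGroup) (x y z : G) : add x y = add x z -> y = z.
Proof.
  intro H. rewrite <- (add0 y), <- (add0 z), <- (addN x), <- !addA, H. reflexivity.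
Qed.

Lemma add4 (G : AbGroup) (a b c d : G) : add (add a b) (add c d) = add (add a c) (add b d).
Proof.
  rewrite <- !addA. f_equal. rewrite !addA. f_equal. apply addC.
Qed.

Lemma add_swap (G : AbGroup) (a b c : G) : add a (add b c) = add b (add a c).
Proof. rewrite !addA. f_equal. apply addC. Qed.

Definition hcomp {X Y Z : AbGroup} (g : hom Y Z) (f : hom X Y) : hom X Z.
Proof. refine {| hfun := fun x => g (f x) |}. intros; rewrite !hadd; reflexivity. Defined.

Definition hid (X : AbGroup) : hom X X := {| hfun := fun x => x; hadd := fun _ _ => eq_refl |}.

Lemma iso_inj (X Y : AbGroup) (f : hom X Y) : is_iso f -> forall x x', f x = f x' -> x = x'.
Proof. intros [g [H1 H2]] x x' E. rewrite <- (H1 x), <- (H1 x'), E; reflexivity. Qed.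

Definition inv_fun (X Y : AbGroup) (f : hom X Y) (H : is_iso f) : Y -> X :=
  proj1_sig (constructive_indefinite_description _ H).

Lemma inv_fun_spec (X Y : AbGroup) (f : hom X Y) (H : is_iso f) :
  (forall x, inv_fun H (f x) = x) /\ (forall y, f (inv_fun H y) = y).
Proof. unfold inv_fun. destruct (constructive_indefinite_description _ H); simpl; auto. Qed.

Definition inv_hom (X Y : AbGroup) (f : hom X Y) (H : is_iso f) : hom Y X.
Proof.
  refine {| hfun := inv_fun H |}.
  intros y1 y2. apply (iso_inj H). rewrite hadd. rewrite !(proj2 (inv_fun_spec H)). reflexivity.
Defined.

Lemma inv_hom_l (X Y : AbGroup) (f : hom X Y) (H : is_iso f) x : inv_hom H (f x) = x.
Proof. apply (proj1 (inv_fun_spec H)). Qed.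
Lemma inv_hom_r (X Y : AbGroup) (f : hom X Y) (H : is_iso f) y : f (inv_hom H y) = y.
Proof. apply (proj2 (inv_fun_spec H)). Qed.

Definition local (L : Localization) (Y : AbGroup) := is_iso (La L Y).

Lemma Lmap_ext (L : Localization) (X Y : AbGroup) (f1 f2 : hom X Y) :
  (forall x, f1 x = f2 x) -> forall y, Lmap L f1 y = Lmap L f2 y.
Proof.
  intros H y. rewrite (@Lmap_comp L _ _ _ f2 (hid Y) f1).
  - apply Lmap_id; reflexivity.
  - intro; simpl; apply H.
Qed.

Lemma uniq (L : Localization) (X Y : AbGroup) (HY : local L Y) (f1 f2 : hom (L X) Y) :
  (forall x, f1 (La L X x) = f2 (La L X x)) -> forall w, f1 w = f2 w.
Proof.
  intros H w. apply (iso_inj HY).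
  rewrite <- !La_nat, La_LX.
  rewrite <- (@Lmap_comp L _ _ _ (La L X) f1 (hcomp f1 (La L X))) by reflexivity.
  rewrite <- (@Lmap_comp L _ _ _ (La L X) f2 (hcomp f2 (La L X))) by reflexivity.
  apply Lmap_ext. intro; simpl; apply H.
Qed.

Lemma local_L (L : Localization) X : local L (L X).
Proof. apply La_LX_iso. Qed.

Definition ext (L : Localization) (X Y : AbGroup) (HY : local L Y) (f : hom X Y) : hom (L X) Y :=
  hcomp (inv_hom HY) (Lmap L f).

Lemma ext_spec (L : Localization) (X Y : AbGroup) (HY : local L Y) (f : hom X Y) x :
  ext HY f (La L X x) = f x.
Proof. unfold ext; simpl. rewrite La_nat. apply inv_hom_l. Qed.

Definition proj (K : Type) (G : AbGroup) (k : K) : hom (Prod K G) G :=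
  {| hfun := fun (p : Prod K G) => p k; hadd := fun _ _ => eq_refl |}.

Definition prod_ret (L : Localization) (K : Type) (G : AbGroup) (HG : local L G) :
  hom (L (Prod K G)) (Prod K G).
Proof.
  refine {| hfun := fun w => (fun k => ext HG (proj G k) w) : Prod K G |}.
  intros; apply functional_extensionality; intro; apply (hadd (ext HG (proj G _))).
Defined.

Lemma local_prod (L : Localization) (K : Type) (G : AbGroup) (HG : local L G) :
  local L (Prod K G).
Proof.
  exists (@prod_ret L K G HG). split.
  - intro p. apply functional_extensionality; intro k. apply (ext_spec HG (proj G k)).
  - intro w. apply (@uniq L (Prod K G) _ (local_L L _) (hcomp (La L _) (@prod_ret L K G HG)) (hid _)).
    intro p. simpl. f_equal. apply functional_extensionality; intro k. apply (ext_spec HG (proj G k)).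
Qed.
Definition dec (K : Type) (x y : K) : {x = y} + {x <> y} := excluded_middle_informative (x = y).

Definition evec (K : Type) (G : AbGroup) (k : K) : hom G (DSum K G).
Proof.
  refine {| hfun := fun y => (exist _ (fun j => if dec j k then y else zero) _ : DSum K G) |}.
  - intros y1 y2. apply sig_eq_pi; simpl. apply functional_extensionality; intro j.
    destruct (dec j k); [reflexivity | symmetry; apply add0].
  Unshelve. exists [k]. intros j H. destruct (dec j k); [left; auto | contradiction].
Defined.

Definition Sum (K : Type) (G M : AbGroup) (c : K -> hom G M) (l : list K) (u : K -> G) : M :=
  fold_right (fun k acc => add (c k (u k)) acc) zero l.

Definition cover (K : Type) (G : AbGroup) (l : list K) (u : K -> G) := forall k, u k <> zero -> In k l.
Arguments cover {K G} l u.

Lemma Sum_add K G M (c : K -> hom G M) l (u v : K -> G) :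
  Sum c l (fun k => add (u k) (v k)) = add (Sum c l u) (Sum c l v).
Proof.
  induction l as [|k l IH]; simpl.
  - symmetry; apply add0.
  - rewrite IH, hadd. apply add4.
Qed.

Definition nzb (K : Type) (G : AbGroup) (u : K -> G) (k : K) : bool :=
  if excluded_middle_informative (u k = zero) then false else true.
Arguments nzb {K G} u k.

Lemma Sum_filter K G M (c : K -> hom G M) l (u : K -> G) :
  Sum c l u = Sum c (filter (nzb u) l) u.
Proof.
  induction l as [|k l IH]; simpl; auto.
  unfold nzb at 1. destruct (excluded_middle_informative (u k = zero)) as [E|E]; simpl.
  - rewrite E, hom0, add0. exact IH.
  - rewrite IH; reflexivity.
Qed.

Lemma Sum_perm K G M (c : K -> hom G M) l1 l2 (u : K -> G) :
  Permutation l1 l2 -> Sum c l1 u = Sum c l2 u.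
Proof.
  induction 1; simpl; auto.
  - rewrite IHPermutation; reflexivity.
  - apply add_swap.
  - congruence.
Qed.

Lemma Sum_key K G M (c : K -> hom G M) l1 l2 (u : K -> G) :
  NoDup l1 -> NoDup l2 -> cover l1 u -> cover l2 u -> Sum c l1 u = Sum c l2 u.
Proof.
  intros N1 N2 C1 C2. rewrite (Sum_filter c l1), (Sum_filter c l2).
  apply Sum_perm. apply NoDup_Permutation; try apply NoDup_filter; auto.
  intro k. rewrite !filter_In. unfold nzb.
  destruct (excluded_middle_informative (u k = zero)) as [E|E]; intuition.
Qed.

Lemma Sum_hom K G M N (c : K -> hom G M) (f : hom M N) l (u : K -> G) :
  f (Sum c l u) = Sum (fun k => hcomp f (c k)) l u.
Proof.
  induction l as [|k l IH]; simpl.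
  - apply hom0.
  - rewrite hadd, IH; reflexivity.
Qed.

Lemma Sum_ext K G M (c c' : K -> hom G M) l (u : K -> G) :
  (forall k y, c k y = c' k y) -> Sum c l u = Sum c' l u.
Proof.
  intro H; induction l as [|k l IH]; simpl; auto. rewrite IH, H; reflexivity.
Qed.

Lemma Sum_evec_pt (K : Type) (G : AbGroup) (l : list K) (w : K -> G) : NoDup l -> forall j,
  (In j l -> proj1_sig (Sum (@evec K G) l w) j = w j) /\
  (~ In j l -> proj1_sig (Sum (@evec K G) l w) j = zero).
Proof.
  induction 1 as [|k l Hk N IH]; intro j; simpl.
  - split; [intros [] | reflexivity].
  - destruct (IH j) as [IH1 IH2]. destruct (dec j k) as [E|E].
    + subst j. split; intros.
      * rewrite IH2 by assumption. apply addr0.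
      * exfalso; auto.
    + split; intros.
      * rewrite IH1 by (destruct H; [congruence|auto]). apply add0.
      * rewrite IH2 by auto. apply add0.
Qed.

Lemma Sum_evec (K : Type) (G : AbGroup) (l : list K) (u : DSum K G) : NoDup l -> cover l (proj1_sig u) ->
  Sum (@evec K G) l (proj1_sig u) = u.
Proof.
  intros N C. apply sig_eq_pi. apply functional_extensionality; intro j.
  destruct (@Sum_evec_pt K G l (proj1_sig u) N j) as [H1 H2].
  destruct (classic (In j l)) as [I|I].
  - auto.
  - rewrite H2 by auto. destruct (classic (proj1_sig u j = zero)) as [E|E]; auto.
    exfalso; apply I, C, E.
Qed.

Lemma Sum_ext2 K G G' M (c : K -> hom G M) (c' : K -> hom G' M) l (u : K -> G) (u' : K -> G') :
  (forall k, c k (u k) = c' k (u' k)) -> Sum c l u = Sum c' l u'.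
Proof.
  intro H; induction l as [|k l IH]; simpl; auto. rewrite IH, H; reflexivity.
Qed.
Definition slist (K : Type) (G : AbGroup) (u : DSum K G) : list K :=
  proj1_sig (constructive_indefinite_description _ (proj2_sig u)).

Lemma slist_cover (K : Type) (G : AbGroup) (u : DSum K G) : cover (slist u) (proj1_sig u).
Proof. unfold slist. destruct (constructive_indefinite_description _ _); simpl; auto. Qed.

Definition ndl (K : Type) (l : list K) := nodup (@dec K) l.

Lemma ndl_nodup K (l : list K) : NoDup (ndl l).
Proof. apply NoDup_nodup. Qed.

Lemma cover_ndl K (G : AbGroup) (l : list K) (u : K -> G) : cover l u -> cover (ndl l) u.
Proof. intros C k H. apply nodup_In. auto. Qed.

Lemma cover_app_l K (G : AbGroup) (l m : list K) (u : K -> G) : cover l u -> cover (l ++ m) u.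
Proof. intros C k H. apply in_or_app; auto. Qed.
Lemma cover_app_r K (G : AbGroup) (l m : list K) (u : K -> G) : cover m u -> cover (l ++ m) u.
Proof. intros C k H. apply in_or_app; auto. Qed.

Section Loc.
Variable L : Localization.
Variable K : Type.

Definition cL (k : K) : hom (L Zgrp) (L (F K)) := Lmap L (evec Zgrp k).

Definition psi_fun (u : DSum K (L Zgrp)) : L (F K) :=
  Sum cL (ndl (slist u)) (proj1_sig u).

Lemma psi_eq (u : DSum K (L Zgrp)) l : NoDup l -> cover l (proj1_sig u) ->
  psi_fun u = Sum cL l (proj1_sig u).
Proof.
  intros N C. apply Sum_key; auto using ndl_nodup, cover_ndl, slist_cover.
Qed.

Definition psi : hom (DSum K (L Zgrp)) (L (F K)).
Proof.
  refine {| hfun := psi_fun |}.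
  intros u v.
  set (m := ndl (slist u ++ slist v)).
  assert (Cu : cover m (proj1_sig u)) by (apply cover_ndl, cover_app_l, slist_cover).
  assert (Cv : cover m (proj1_sig v)) by (apply cover_ndl, cover_app_r, slist_cover).
  rewrite (psi_eq u (ndl_nodup _) Cu), (psi_eq v (ndl_nodup _) Cv).
  rewrite (@psi_eq (add u v) m (ndl_nodup _)).
  - simpl. apply Sum_add.
  - intros k H. simpl in H. destruct (classic (proj1_sig u k = zero)) as [E|E].
    + rewrite E, add0 in H. auto.
    + auto.
Defined.

Lemma fin_to_loc :
  (forall y : Prod K (L Zgrp), N_L L y -> fin_supp y) ->
  is_L_localization L (dsum_map K (La L Zgrp)).
Proof.
  intro Hfin.
  pose (HP := local_prod K (local_L L Zgrp)).
  pose (g := ext HP (hcomp (Defs.incl K (L Zgrp)) (dsum_map K (La L Zgrp)))).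
  assert (Hg : forall x, g (La L (F K) x) = Defs.incl K (L Zgrp) (dsum_map K (La L Zgrp) x)).
  { intro x. apply (ext_spec HP (hcomp (Defs.incl K (L Zgrp)) (dsum_map K (La L Zgrp)))). }
  assert (Hs : forall w, fin_supp (g w)).
  { intro w. apply Hfin. exists g. split; [exact Hg | exists w; reflexivity]. }
  assert (Ex : {phi : hom (L (F K)) (DSum K (L Zgrp)) | forall w, proj1_sig (phi w) = g w}).
  { unshelve eexists.
    - refine {| hfun := fun w => (exist _ (g w : K -> L Zgrp) (Hs w) : DSum K (L Zgrp)) |}.
      intros; apply sig_eq_pi; exact (hadd g _ _).
    - intro; reflexivity. }
  destruct Ex as [phi Ephi].
  assert (Hphi : forall x, phi (La L (F K) x) = dsum_map K (La L Zgrp) x).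
  { intro x. apply sig_eq_pi. rewrite Ephi. exact (Hg x). }
  assert (HphiC : forall k y, phi (cL k y) = evec (L Zgrp) k y).
  { intros k y. apply sig_eq_pi. rewrite Ephi.
    refine (@uniq L Zgrp _ HP (hcomp g (cL k)) (hcomp (Defs.incl K (L Zgrp)) (evec (L Zgrp) k))
             _ y). intro n.
    change (g (cL k (La L Zgrp n)) = proj1_sig (evec (L Zgrp) k (La L Zgrp n))).
    unfold cL. rewrite La_nat, Hg. simpl.
    apply functional_extensionality; intro j. destruct (dec j k); auto. apply hom0. }
  exists phi. split; [|exact Hphi].
  exists psi. split.
  - intro w.
    refine (@uniq L (F K) _ (local_L L _) (hcomp psi phi) (hid _) _ w). intro x.
    simpl. rewrite Hphi.
    set (m := ndl (slist (dsum_map K (La L Zgrp) x) ++ slist x)).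
    rewrite (@psi_eq _ m (ndl_nodup _)).
    2: apply cover_ndl, cover_app_l, slist_cover.
    rewrite (Sum_ext2 _ (fun k => hcomp (La L (F K)) (evec Zgrp k)) _ _ (proj1_sig x)).
    * rewrite <- Sum_hom. f_equal. apply Sum_evec; [apply ndl_nodup | apply cover_ndl, cover_app_r, slist_cover].
    * intro k. simpl. unfold cL. apply La_nat.
  - intro u. simpl psi. unfold psi_fun.
    change (phi (Sum cL (ndl (slist u)) (proj1_sig u)) = u).
    rewrite Sum_hom. rewrite (Sum_ext2 _ (@evec K (L Zgrp)) _ _ (proj1_sig u)).
    + apply Sum_evec; auto using ndl_nodup, cover_ndl, slist_cover.
    + intro k. apply HphiC.
Qed.
End Loc.
Lemma nat_not_all (s : list nat) : exists i, ~ In i s.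
Proof.
  assert (H : forall x, In x s -> x <= fold_right plus 0 s).
  { induction s as [|a s IH]; simpl; [tauto|]. intros x [E|E]; [lia|]. specialize (IH x E); lia. }
  exists (S (fold_right plus 0 s)). intro I. specialize (H _ I). lia.
Qed.

Fixpoint lst (K : Type) (ch : list K -> K) (n : nat) : list K :=
  match n with 0 => [] | S n => ch (lst ch n) :: lst ch n end.

Lemma lst_in (K : Type) (ch : list K -> K) m n : m < n -> In (ch (lst ch m)) (lst ch n).
Proof.
  induction n; intro H; [lia|]. simpl. destruct (Nat.eq_dec m n); [subst; left; auto|].
  right; apply IHn; lia.
Qed.

Lemma inf_seq (K : Type) (P : K -> Prop) :
  (forall s : list K, exists k, P k /\ ~ In k s) ->
  exists kk : nat -> K, (forall n, P (kk n)) /\ (forall m n, kk m = kk n -> m = n).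
Proof.
  intro H.
  pose (ch := fun s => proj1_sig (constructive_indefinite_description _ (H s))).
  assert (Hch : forall s, P (ch s) /\ ~ In (ch s) s).
  { intro s. unfold ch. destruct (constructive_indefinite_description _ _); simpl; auto. }
  exists (fun n => ch (lst ch n)). split.
  - intro n; apply Hch.
  - intros m n E. destruct (Nat.lt_total m n) as [l|[l|l]]; auto; exfalso.
    + apply (proj2 (Hch (lst ch n))). rewrite <- E. apply lst_in; auto.
    + apply (proj2 (Hch (lst ch m))). rewrite E. apply lst_in; auto.
Qed.

Lemma fin_supp_res (K : Type) (G : AbGroup) (kk : nat -> K) (Hinj : forall m n, kk m = kk n -> m = n)
  (u : K -> G) : fin_supp u -> fin_supp (fun i => u (kk i)).
Proof.
  intros [s Hs].
  exists (map (fun t => epsilon (inhabits 0) (fun i => kk i = t)) s).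
  intros i Hi. apply in_map_iff. exists (kk i). split; auto.
  apply Hinj. apply (epsilon_spec (inhabits 0) (fun j => kk j = kk i)). eauto.
Qed.

Definition resmap (K : Type) (G : AbGroup) (kk : nat -> K) (Hinj : forall m n, kk m = kk n -> m = n) :
  hom (DSum K G) (DSum nat G).
Proof.
  refine {| hfun := fun u : DSum K G =>
     (exist _ (fun i => proj1_sig u (kk i)) (@fin_supp_res K G kk Hinj _ (proj2_sig u)) : DSum nat G) |}.
  intros; apply sig_eq_pi; reflexivity.
Defined.

Definition prodres (K : Type) (G : AbGroup) (kk : nat -> K) : hom (Prod K G) (Prod nat G) :=
  {| hfun := fun (v : Prod K G) => (fun i => v (kk i)) : Prod nat G; hadd := fun _ _ => eq_refl |}.

Lemma loc_to_fin (L : Localization) (K : Type) :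
  is_L_localization L (dsum_map K (La L Zgrp)) ->
  forall y : Prod K (L Zgrp), N_L L y -> fin_supp y.
Proof.
  intros [phi [_ Hphi]] y [g [Hg [x <-]]].
  assert (E : forall w, g w = Defs.incl K (L Zgrp) (phi w)).
  { apply (@uniq L (F K) _ (local_prod K (local_L L Zgrp)) g (hcomp (Defs.incl K (L Zgrp)) phi)).
    intro x'. rewrite Hg. simpl. rewrite Hphi. reflexivity. }
  rewrite E. exact (proj2_sig (phi x)).
Qed.

Lemma nat_loc_to_fin (L : Localization) :
  is_L_localization L (dsum_map nat (La L Zgrp)) ->
  forall (K : Type) (y : Prod K (L Zgrp)), N_L L y -> fin_supp y.
Proof.
  intros [phi [_ Hphi]] K y [g [Hg [x <-]]].
  apply NNPP. intro Hnf.
  assert (Hs : forall s : list K, exists k, g x k <> zero /\ ~ In k s).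
  { intro s. apply NNPP. intro Hn. apply Hnf. exists s. intros k Hk.
    apply NNPP. intro Hk'. apply Hn. exists k. auto. }
  destruct (inf_seq _ Hs) as [kk [Hnz Hinj]].
  assert (E : forall w, @prodres K (L Zgrp) kk (g w) =
                        Defs.incl nat (L Zgrp) (phi (Lmap L (@resmap K Zgrp kk Hinj) w))).
  { apply (@uniq L (F K) _ (local_prod nat (local_L L Zgrp))
             (hcomp (@prodres K (L Zgrp) kk) g)
             (hcomp (Defs.incl nat (L Zgrp)) (hcomp phi (Lmap L (@resmap K Zgrp kk Hinj))))).
    intro x'. simpl. rewrite Hg, La_nat, Hphi. reflexivity. }
  destruct (proj2_sig (phi (Lmap L (@resmap K Zgrp kk Hinj) x))) as [s Hs'].
  destruct (nat_not_all s) as [i Hi]. apply Hi, Hs'.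
  intro Z. apply (Hnz i).
  change (@prodres K (L Zgrp) kk (g x) i = zero). rewrite E. exact Z.
Qed.

Theorem lemma10 (L : Localization)
  (HLZ : exists z : L Zgrp, z <> zero) :
  (support_is_omega0 L <-> is_L_localization L (dsum_map nat (La L Zgrp))) /\
  (is_L_localization L (dsum_map nat (La L Zgrp)) <->
     forall K : Type, is_L_localization L (dsum_map K (La L Zgrp))).
Proof.
  split; split.
  - intros [H1 _]. apply fin_to_loc. apply H1.
  - intro H. split; [apply (nat_loc_to_fin H)|].
    intro n. destruct HLZ as [z Hz]. destruct H as [phi [[psi [_ Hpsi]] Hphi]].
    pose (yf := fun i : nat => if Nat.ltb i n then z else zero).
    assert (Fy : fin_supp yf).
    { exists (seq 0 n). intros i Hi. unfold yf in Hi. apply in_seq.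
      destruct (Nat.ltb i n) eqn:E; [apply Nat.ltb_lt in E; lia | tauto]. }
    exists nat, (yf : Prod nat (L Zgrp)). split.
    + exists (hcomp (Defs.incl nat (L Zgrp)) phi). split.
      * intro x. simpl. rewrite Hphi. reflexivity.
      * exists (psi (exist _ yf Fy : DSum nat (L Zgrp))). simpl. rewrite Hpsi. reflexivity.
    + exists (seq 0 n). split; [apply seq_NoDup|]. split; [apply length_seq|].
      intros k Hk. apply in_seq in Hk. unfold yf.
      destruct (Nat.ltb k n) eqn:E; [auto | apply Nat.ltb_ge in E; lia].
  - intros H K. apply fin_to_loc. apply (nat_loc_to_fin H).
  - intro H. apply H.
Qed.
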